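(* Let $\mathbb{V}$ be the variety in the language consisting of one binary operation symbol $*$ and two constant symbols $p$ and $0$, defined by the laws (writing $a*b*c$ for $(a*b)*c$) $$0*x = x*0 = 0,\qquad x*y*z = x*z*y,\qquad x*(y*z) = 0,\qquad x*y*y = 0.$$ Then $\mathbb{V}$ is a finitely based, locally finite variety which has uncountably many term clones.
   Context: Let $F_{\mathbb{V}}$ denote the free algebra in $\mathbb{V}$ on countably many generators $x_1, x_2, \ldots$. A term clone of $\mathbb{V}$ is a subset $S \subseteq F_{\mathbb{V}}$ which contains all the generators $x_1, x_2, \ldots$ and is closed under substitution: whenever $t(x_1,\ldots,x_n) \in S$ and $t_1,\ldots,t_n \in S$, then $t(t_1,\ldots,t_n) \in S$. (Equivalently, a term clone is a set of term functions of $F_{\mathbb{V}}$ containing all projections and closed under composition.) A variety is locally finite if every finitely generated algebra in it is finite, and finitely based if it is defined by finitely many laws. *)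

(* Defs.v *)
From Stdlib Require Import List.
Import ListNotations.

Inductive term : Type :=
| Var : nat -> term
| Pc : term
| Zc : term
| Mul : term -> term -> term.

Fixpoint subst (s : nat -> term) (t : term) : term :=
  match t with
  | Var n => s n
  | Pc => Pc
  | Zc => Zc
  | Mul a b => Mul (subst s a) (subst s b)
  end.

Definition law := (term * term)%type.

Inductive derivable (L : list law) : term -> term -> Prop :=
| der_refl : forall t, derivable L t t
| der_sym : forall t u, derivable L t u -> derivable L u t
| der_trans : forall t u v, derivable L t u -> derivable L u v -> derivable L t v
| der_mul : forall a a' b b', derivable L a a' -> derivable L b b' ->
    derivable L (Mul a b) (Mul a' b')
| der_ax : forall l r (s : nat -> term), In (l, r) L ->
    derivable L (subst s l) (subst s r).

Definition x := Var 0.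
Definition y := Var 1.
Definition z := Var 2.

Definition V_laws : list law :=
  [ (Mul Zc x, Zc);
    (Mul x Zc, Zc);
    (Mul (Mul x y) z, Mul (Mul x z) y);
    (Mul x (Mul y z), Zc);
    (Mul (Mul x y) y, Zc) ].

(* Equality in the free algebra F_V (on generators Var 0, Var 1, ...). *)
Definition eqV (t u : term) : Prop := derivable V_laws t u.

Definition finitely_based : Prop :=
  exists L : list law, forall t u, eqV t u <-> derivable L t u.

Record algebra : Type := {
  carrier :> Type;
  a_mul : carrier -> carrier -> carrier;
  a_p : carrier;
  a_0 : carrier }.

Fixpoint eval (A : algebra) (v : nat -> A) (t : term) : A :=
  match t with
  | Var n => v n
  | Pc => a_p A
  | Zc => a_0 A
  | Mul a b => a_mul A (eval A v a) (eval A v b)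
  end.

Definition in_V (A : algebra) : Prop :=
  forall l r, In (l, r) V_laws -> forall v : nat -> A, eval A v l = eval A v r.

Fixpoint vars_below (n : nat) (t : term) : Prop :=
  match t with
  | Var m => m < n
  | Pc | Zc => True
  | Mul a b => vars_below n a /\ vars_below n b
  end.

Definition generated_by (A : algebra) (g : nat -> A) (n : nat) : Prop :=
  forall a : A, exists t, vars_below n t /\ eval A g t = a.

Definition finite_type (T : Type) : Prop := exists l : list T, forall a, In a l.

Definition locally_finite : Prop :=
  forall A : algebra, in_V A ->
  forall (g : nat -> A) (n : nat), generated_by A g n -> finite_type A.

(* A subset of F_V, represented as an eqV-closed predicate on terms. *)
Definition subset_FV (S : term -> Prop) : Prop :=
  forall t u, eqV t u -> S t -> S u.

Definition term_clone (S : term -> Prop) : Prop :=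
  subset_FV S /\
  (forall n, S (Var n)) /\
  (forall (t : term) (s : nat -> term), S t -> (forall n, S (s n)) -> S (subst s t)).

Definition same_subset (S T : term -> Prop) : Prop := forall t, S t <-> T t.

Definition uncountably_many_clones : Prop :=
  forall C : nat -> term -> Prop,
    exists S, term_clone S /\ forall k, ~ same_subset S (C k).

(* Main.v *)
Require Import Defs.
From Stdlib Require Import List Arith Lia Classical FunctionalExtensionality Bool.
Import ListNotations.

Lemma subst_subst : forall s s0 l,
  subst s (subst s0 l) = subst (fun n => subst s (s0 n)) l.
Proof. intros s s0 l; induction l; simpl; congruence. Qed.

Lemma der_subst : forall L t u s, derivable L t u -> derivable L (subst s t) (subst s u).
Proof.
  intros L t u s H; induction H.
  - apply der_refl.
  - apply der_sym; auto.
  - eapply der_trans; eauto.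
  - simpl; apply der_mul; auto.
  - rewrite !subst_subst; apply der_ax; auto.
Qed.

Lemma eval_subst : forall A v s l,
  eval A v (subst s l) = eval A (fun n => eval A v (s n)) l.
Proof. intros A v s l; induction l; simpl; congruence. Qed.

Lemma soundness : forall A, in_V A -> forall t u, eqV t u ->
  forall v, eval A v t = eval A v u.
Proof.
  intros A HA t u H; induction H as [|? ? ? IH|? ? ? ? IH1 ? IH2|? ? ? ? ? IH1 ? IH2|? ? ? Hin]; intro w; simpl.
  - auto.
  - auto.
  - rewrite IH1, IH2; auto.
  - rewrite IH1, IH2; auto.
  - rewrite !eval_subst; apply HA; auto.
Qed.

Inductive M := MZ | MA (a : nat) | MP (h : nat) (Sb : nat -> bool).

Definition mm (p q : M) : M :=
  match p, q with
  | MZ, _ => MZ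
  | _, MZ => MZ
  | _, MP _ _ => MZ
  | MA h, MA a => MP h (fun c => Nat.eqb c a)
  | MP h T, MA a => if T a then MZ else MP h (fun c => Nat.eqb c a || T c)
  end.

Definition Malg : algebra := Build_algebra M mm (MA 0) MZ.

Lemma M_in_V : in_V Malg.
Proof.
  intros l r Hin v; simpl in Hin.
  destruct Hin as [E|[E|[E|[E|[E|[]]]]]]; inversion E; subst; clear E; simpl.
  - destruct (v 0); reflexivity.
  - destruct (v 0); reflexivity.
  - destruct (v 0) as [|h|h T], (v 1) as [|a|? ?], (v 2) as [|b|? ?]; simpl; auto;
      try (destruct (T a); reflexivity);
      try (destruct (T b); reflexivity).
    + rewrite (Nat.eqb_sym b a). destruct (a =? b) eqn:E; auto.
      f_equal; extensionality c; apply orb_comm.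
    + try rewrite (Nat.eqb_sym b a).
      destruct (T a) eqn:Ea, (T b) eqn:Eb; simpl; rewrite ?Ea, ?Eb, ?orb_true_r, ?orb_false_r; auto;
      rewrite (Nat.eqb_sym b a); destruct (a =? b); simpl; auto.
      f_equal; extensionality c; destruct (c =? a), (c =? b); reflexivity.
  - destruct (v 0) as [|h|h T], (v 1) as [|a|? ?], (v 2) as [|b|? ?]; simpl; auto;
      try (destruct (T a); reflexivity);
      match goal with |- context [if ?X b then _ else _] => destruct (X b); reflexivity end.
  - destruct (v 0) as [|h|h T], (v 1) as [|a|? ?]; simpl; auto.
    + rewrite Nat.eqb_refl; auto.
    + destruct (T a); simpl; auto. rewrite Nat.eqb_refl; auto.
Qed.

Definition atomt (c : nat) : term := match c with 0 => Pc | S i => Var i end.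
Definition lnp (L : list nat) : term := fold_left (fun acc c => Mul acc (atomt c)) L Pc.

Lemma lnp_app : forall L c, lnp (L ++ [c]) = Mul (lnp L) (atomt c).
Proof. intros; unfold lnp; rewrite fold_left_app; reflexivity. Qed.

Definition mv (n : nat) : Malg := MA (S n).

Lemma eval_atomt : forall c, eval Malg mv (atomt c) = MA c.
Proof. destruct c; reflexivity. Qed.

Lemma eval_lnp_app : forall L c,
  eval Malg mv (lnp (L ++ [c])) = mm (eval Malg mv (lnp L)) (MA c).
Proof. intros; rewrite lnp_app; simpl; rewrite eval_atomt; reflexivity. Qed.

Lemma lnp_atm : forall L a, eval Malg mv (lnp L) = MA a -> L = [].
Proof.
  intros L; induction L using rev_ind; intros a E; auto.
  rewrite eval_lnp_app in E.
  destruct (eval Malg mv (lnp L)) as [|h|h T]; simpl in E; try discriminate.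
  destruct (T x); discriminate.
Qed.

Lemma lnp_bwd : forall L h T, eval Malg mv (lnp L) = MP h T ->
  NoDup L /\ forall c, T c = true <-> In c L.
Proof.
  intros L; induction L using rev_ind; intros h T E.
  - discriminate.
  - rewrite eval_lnp_app in E.
    destruct (eval Malg mv (lnp L)) as [|h0|h0 T0] eqn:E0; simpl in E; try discriminate.
    + apply lnp_atm in E0; subst L. injection E; intros; subst. simpl.
      split. constructor; auto; constructor.
      intro c; rewrite Nat.eqb_eq; intuition.
    + destruct (T0 x) eqn:Ex; try discriminate.
      injection E; intros; subst.
      destruct (IHL _ _ eq_refl) as [ND HT].
      split.
      * apply NoDup_app; auto. constructor; auto; constructor.
        intros a Ha Ha'. destruct Ha' as [<-|[]].
        apply HT in Ha; congruence.
      * intro c. rewrite in_app_iff, orb_true_iff, Nat.eqb_eq, HT. simpl; intuition.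
Qed.

Lemma lnp_fwd : forall L, NoDup L -> L <> [] -> exists T, eval Malg mv (lnp L) = MP 0 T.
Proof.
  intros L; induction L using rev_ind; intros ND NE.
  - congruence.
  - rewrite eval_lnp_app.
    assert (NDL : NoDup L) by (eapply NoDup_app_remove_r; eauto).
    assert (NI : ~ In x L).
    { intro Hx. apply (NoDup_remove_2 L [] x); auto. rewrite app_nil_r; auto. }
    destruct L as [|d L'].
    + simpl. eauto.
    + destruct (IHL NDL ltac:(discriminate)) as [T E]. rewrite E.
      destruct (lnp_bwd _ _ _ E) as [_ HT].
      simpl. destruct (T x) eqn:Tx.
      * apply HT in Tx; contradiction.
      * eauto.
Qed.

Lemma lnp_len : forall L L', NoDup L' -> eval Malg mv (lnp L) = eval Malg mv (lnp L') ->
  length L = length L'.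
Proof.
  intros L L' ND E.
  destruct L' as [|d L''].
  - simpl in E. apply lnp_atm in E; subst; reflexivity.
  - destruct (lnp_fwd (d :: L'') ND ltac:(discriminate)) as [T ET].
    rewrite ET in E.
    destruct (lnp_bwd _ _ _ E) as [ND1 H1].
    destruct (lnp_bwd _ _ _ ET) as [_ H2].
    apply Nat.le_antisymm; apply NoDup_incl_length; auto;
      intros c Hc.
    + apply H2, H1; auto.
    + apply H1, H2; auto.
Qed.

Lemma lnp_notvar : forall L' m, NoDup L' ->
  eval Malg mv (lnp L') <> MZ /\ eval Malg mv (lnp L') <> MA (S m).
Proof.
  intros L' m ND. destruct L' as [|d L''].
  - simpl; split; discriminate.
  - destruct (lnp_fwd (d :: L'') ND ltac:(discriminate)) as [T ET].
    rewrite ET; split; discriminate.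
Qed.

Definition shapeA (w : term) : Prop :=
  (exists m, w = Var m) \/ w = Zc \/ exists L, w = lnp L.
Definition shape (I : nat -> Prop) (w : term) : Prop :=
  (exists m, w = Var m) \/ w = Zc \/ exists L, w = lnp L /\ I (length L).
Definition SI (I : nat -> Prop) (t : term) : Prop :=
  exists w, eqV t w /\ shape I w.

Definition val3 (a b c : term) : nat -> term :=
  fun n => match n with 0 => a | 1 => b | _ => c end.

Lemma law1 : forall a, eqV (Mul Zc a) Zc.
Proof. intro a. exact (der_ax V_laws (Mul Zc x) Zc (val3 a a a) ltac:(simpl; auto)). Qed.
Lemma law2 : forall a, eqV (Mul a Zc) Zc.
Proof. intro a. exact (der_ax V_laws (Mul x Zc) Zc (val3 a a a) ltac:(simpl; auto)). Qed.
Lemma law4 : forall a b c, eqV (Mul a (Mul b c)) Zc.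
Proof. intros a b c. exact (der_ax V_laws (Mul x (Mul y z)) Zc (val3 a b c) ltac:(simpl; auto 6)). Qed.

Lemma eqV_trans : forall a b c, eqV a b -> eqV b c -> eqV a c.
Proof. intros; eapply der_trans; eauto. Qed.

Lemma closure : forall s L,
  (forall c, In c L -> exists w, eqV (subst s (atomt c)) w /\ shapeA w) ->
  eqV (subst s (lnp L)) Zc \/ exists L', length L' = length L /\ eqV (subst s (lnp L)) (lnp L').
Proof.
  intros s L; induction L as [|c0 L IHL] using rev_ind; intro H.
  - right; exists []; split; auto; apply der_refl.
  - rewrite lnp_app; simpl.
    destruct (H c0 ltac:(apply in_or_app; simpl; auto)) as [w [Hw Sw]].
    destruct IHL as [HZ|[L' [HL HX]]].
    { intros c Hc; apply H; apply in_or_app; auto. }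
    + left. eapply eqV_trans. apply der_mul. exact HZ. apply der_refl. apply law1.
    + assert (E : eqV (Mul (subst s (lnp L)) (subst s (atomt c0))) (Mul (lnp L') w))
        by (apply der_mul; auto).
      destruct Sw as [[m ->]|[->|[L0 ->]]].
      * right; exists (L' ++ [S m]); rewrite !length_app, HL; split; auto.
        rewrite lnp_app; exact E.
      * left; eapply eqV_trans; [exact E| apply law2].
      * destruct L0 as [|d L1] using rev_ind.
        -- right; exists (L' ++ [0]); rewrite !length_app, HL; split; auto.
           rewrite lnp_app; exact E.
        -- left; eapply eqV_trans; [exact E|]. rewrite lnp_app. apply law4.
Qed.

Lemma SI_clone : forall I, term_clone (SI I).
Proof.
  intro I; split; [|split].
  - intros t u H [w [Hw Sw]]. exists w; split; auto.
    eapply eqV_trans; [apply der_sym; exact H| exact Hw].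
  - intro n; exists (Var n); split; [apply der_refl|left; eauto].
  - intros t s [w [Hw Sw]] Hs.
    assert (E : eqV (subst s t) (subst s w)) by (apply der_subst; auto).
    destruct Sw as [[m ->]|[->|[L [-> HL]]]].
    + destruct (Hs m) as [w' [Hw' Sw']]. exists w'; split; auto.
      eapply eqV_trans; eauto.
    + exists Zc; split; auto; right; left; auto.
    + destruct (closure s L) as [HZ|[L' [HL' HX]]].
      * intros c Hc. destruct c as [|i]; simpl.
        -- exists Pc; split; [apply der_refl|right; right; exists []; auto].
        -- destruct (Hs i) as [w' [Hw' Sw']]; exists w'; split; auto.
           destruct Sw' as [?|[?|[L0 [? ?]]]]; [left|right;left|right;right;eauto]; auto.
      * exists Zc; split; [eapply eqV_trans; eauto|right; left; auto].
      * exists (lnp L'); split; [eapply eqV_trans; eauto|right; right; exists L'; split; auto].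
        rewrite HL'; auto.
Qed.

Definition tk (k : nat) : term := lnp (seq 1 k).

Lemma SI_tk : forall I k, SI I (tk k) <-> I k.
Proof.
  intros I k; split.
  - intros [w [Hw Sw]].
    pose proof (soundness Malg M_in_V _ _ Hw mv) as E.
    pose proof (seq_NoDup k 1) as ND.
    destruct Sw as [[m ->]|[->|[L [-> HL]]]].
    + exfalso; apply (proj2 (lnp_notvar _ m ND)); exact E.
    + exfalso; apply (proj1 (lnp_notvar _ 0 ND)); exact E.
    + symmetry in E. pose proof (lnp_len _ _ ND E) as HLen.
      rewrite length_seq in HLen. congruence.
  - intro Hk. exists (tk k); split; [apply der_refl|right; right; exists (seq 1 k); split; auto].
    rewrite length_seq; auto.
Qed.

Lemma uncountable : uncountably_many_clones.
Proof.
  intro C. exists (SI (fun k => ~ C k (tk k))). split; [apply SI_clone|].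
  intros k Hs. specialize (Hs (tk k)). rewrite SI_tk in Hs. tauto.
Qed.

Definition v3 {A : Type} (a b c : A) : nat -> A :=
  fun n => match n with 0 => a | 1 => b | _ => c end.


Lemma LF_laws : forall A : algebra, in_V A ->
  (forall a, a_mul A (a_0 A) a = a_0 A) /\
  (forall a, a_mul A a (a_0 A) = a_0 A) /\
  (forall a b c, a_mul A (a_mul A a b) c = a_mul A (a_mul A a c) b) /\
  (forall a b c, a_mul A a (a_mul A b c) = a_0 A) /\
  (forall a b, a_mul A (a_mul A a b) b = a_0 A).
Proof.
  intros A H. repeat split.
  - intro a; exact (H (Mul Zc x) Zc ltac:(simpl; auto) (v3 a a a)).
  - intro a; exact (H (Mul x Zc) Zc ltac:(simpl; auto) (v3 a a a)).
  - intros a b c; exact (H (Mul (Mul x y) z) _ ltac:(simpl; auto) (v3 a b c)).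
  - intros a b c; exact (H (Mul x (Mul y z)) Zc ltac:(simpl; auto 6) (v3 a b c)).
  - intros a b; exact (H (Mul (Mul x y) y) Zc ltac:(simpl; auto 7) (v3 a b b)).
Qed.

Fixpoint words {T : Type} (k : nat) (al : list T) : list (list T) :=
  match k with
  | 0 => [[]]
  | S k' => [] :: flat_map (fun c => map (cons c) (words k' al)) al
  end.

Lemma in_words : forall T k (al l : list T), incl l al -> length l <= k -> In l (words k al).
Proof.
  intros T k; induction k; intros al l Hi Hl.
  - destruct l; simpl in *; [auto|lia].
  - destruct l as [|c l]; simpl; [auto|right].
    apply in_flat_map. exists c; split; [apply Hi; simpl; auto|].
    apply in_map. apply IHk; [intros d Hd; apply Hi; simpl; auto|simpl in Hl; lia].
Qed.

Lemma locfin : locally_finite.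
Proof.
  intros A HA g n Hg.
  destruct (LF_laws A HA) as [L1 [L2 [L3 [L4 L5]]]].
  set (m := a_mul A). set (o := a_0 A).
  set (ap := fun h l => fold_left m l h).
  assert (ap0 : forall l, ap o l = o).
  { induction l; simpl; auto. unfold ap in *; simpl. unfold m, o; rewrite L1. auto. }
  assert (mv : forall l a c, ap (m a c) l = m (ap a l) c).
  { induction l as [|b l IH]; intros a c; simpl; auto.
    unfold ap in *; simpl. unfold m at 2 3. rewrite L3. apply IH. }
  assert (dup : forall l a c, In c l -> ap (m a c) l = o).
  { induction l as [|b l IH]; intros a c Hc; [destruct Hc|].
    destruct Hc as [<-|Hc].
    - unfold ap; simpl. unfold m at 2 3. rewrite L5. apply ap0.
    - unfold ap in *; simpl. unfold m at 2 3. rewrite L3. apply IH; auto. }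
  set (At := a_p A :: map g (seq 0 n)).
  set (G := fun e => e = o \/ exists h l, In h At /\ incl l At /\ NoDup l /\ e = ap h l).
  assert (HG : forall t, vars_below n t -> G (eval A g t)).
  { induction t as [k| | |a IHa b IHb]; simpl; intro Hv.
    - right; exists (g k), []; repeat split; auto.
      + right; apply in_map; apply in_seq; lia.
      + intros ? [].
      + constructor.
    - right; exists (a_p A), []; repeat split; [left; auto| intros ? []|constructor].
    - left; auto.
    - destruct Hv as [Ha Hb].
      destruct (IHa Ha) as [Ea|[h [l [Hh [Hl [Nl Ea]]]]]];
      destruct (IHb Hb) as [Eb|[h' [l' [Hh' [Hl' [Nl' Eb]]]]]].
      + left; rewrite Ea; apply L1.
      + left; rewrite Ea; apply L1.
      + left; rewrite Eb; apply L2.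
      + destruct l' as [|c l''] using rev_ind.
        * simpl in Eb. rewrite Ea, Eb. fold m.
          destruct (classic (In h' l)) as [Hi|Hi].
          -- left. rewrite <- mv. apply dup; auto.
          -- right. exists h, (h' :: l). repeat split; auto.
             ++ intros d [<-|Hd]; auto.
             ++ constructor; auto.
             ++ rewrite <- mv. reflexivity.
        * left. rewrite Eb. unfold ap. rewrite fold_left_app. simpl. apply L4. }
  exists (o :: flat_map (fun h => map (ap h) (words (S n) At)) At).
  intro a. destruct (Hg a) as [t [Ht <-]].
  destruct (HG t Ht) as [E|[h [l [Hh [Hl [Nl E]]]]]]; [left; auto|right].
  rewrite E. apply in_flat_map. exists h; split; auto. apply in_map.
  apply in_words; auto.
  replace (S n) with (length At) by (simpl; rewrite length_map, length_seq; auto).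
  apply NoDup_incl_length; auto.
Qed.

Theorem mainTheorem1 :
  finitely_based /\ locally_finite /\ uncountably_many_clones.
Proof.
  split; [|split].
  - exists V_laws; intros; unfold eqV; tauto.
  - exact locfin.
  - exact uncountable.
Qed.
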